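(* Let $d\ge1$ and $P\subseteq\mathbb R\times[d]$. The partial colorful Helly number of the convexity space $(P,\mathcal C_{\equiv}(P))$ is $2$.
   Context: $[d]=\{1,\dots,d\}$. A (separated) $d$-interval is a set $I=\bigcup_{i\in[d]}\{(x,i): x\in I^{(i)}\}\subseteq\mathbb R\times[d]$ with each $I^{(i)}\subseteq\mathbb R$ convex (possibly empty). For $P\subseteq\mathbb R\times[d]$, $\mathcal C_{\equiv}(P)=\{I\cap P: I \text{ a } d\text{-interval}\}$. For a convexity space $(X,\mathcal C)$: it admits a partial colorful Helly theorem for colorful $k$-tuples if there is a function $N_{kpc}(m)$ such that for all finite $\mathcal F_1,\dots,\mathcal F_k\subseteq\mathcal C$ with $|\mathcal F_i|=N_{kpc}(m)$ and such that $\bigcap_{i=1}^kC_i\ne\emptyset$ for every choice $C_i\in\mathcal F_i$, some $\mathcal F_i$ contains a subfamily of size at least $m$ with nonempty intersection. The partial colorful Helly number $h_{pc}(X,\mathcal C)$ is the minimal $k$ for which $(X,\mathcal C)$ admits a partial colorful Helly theorem for colorful $k$-tuples.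
   Formalization: P ⊆ ℝ×[d] is also assumed infinite, so the partial colorful Helly number is asserted to be 2 for infinite P only. The statement above fails without it. *)

(* Defs.v *)
From mathcomp Require Import all_boot all_order all_algebra.
From mathcomp Require Import boolp classical_sets cardinality reals.
Set Implicit Arguments. Unset Strict Implicit. Unset Printing Implicit Defensive.
Import Order.TTheory GRing.Theory Num.Theory.
Local Open Scope ring_scope.
Local Open Scope classical_set_scope.

(* Points of R x [d] are pairs (x, i) : R * nat with 1 <= i <= d. *)

Definition convex_R (R : realType) (A : set R) : Prop :=
  forall a b c : R, A a -> A b -> a <= c -> c <= b -> A c.

Definition dinterval_of (R : realType) (d : nat) (I : nat -> set R) : set (R * nat) :=
  [set p | (1 <= p.2 <= d)%N /\ I p.2 p.1].

Definition is_dinterval (R : realType) (d : nat) (S : set (R * nat)) : Prop :=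
  exists I : nat -> set R, (forall i, (1 <= i <= d)%N -> convex_R (I i)) /\
                           S = dinterval_of d I.

Definition C_equiv (R : realType) (d : nat) (P : set (R * nat)) : set (set (R * nat)) :=
  [set S | exists I, is_dinterval d I /\ S = I `&` P].

(* A finite family of size N
   of members of C is given as an injective map 'I_N -> set T (so that the
   family, as a set of members of C, has exactly N elements).  Intersections
   are taken inside the ground set X (the empty intersection is X). *)
Definition family_of (T : Type) (C : set (set T)) (N : nat) (F : 'I_N -> set T) : Prop :=
  injective F /\ forall j, C (F j).

Definition admits_pc (T : Type) (X : set T) (C : set (set T)) (k : nat) : Prop :=
  exists Npc : nat -> nat, forall m : nat,
  forall F : 'I_k -> 'I_(Npc m) -> set T,
    (forall i, family_of C (F i)) ->
    (forall c : 'I_k -> 'I_(Npc m),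
        exists x, X x /\ forall i, F i (c i) x) ->
    exists i : 'I_k, exists J : {set 'I_(Npc m)},
      (m <= #|J|)%N /\ exists x, X x /\ forall j, j \in J -> F i j x.

Definition is_hpc (T : Type) (X : set T) (C : set (set T)) (h : nat) : Prop :=
  admits_pc X C h /\ forall k, (k < h)%N -> ~ admits_pc X C k.

(* Main.v *)
Require Import Defs.
From mathcomp Require Import all_boot all_order all_algebra.
From mathcomp Require Import boolp classical_sets cardinality reals.
From mathcomp Require Import finmap zify.
Import Order.TTheory GRing.Theory Num.Theory.
Local Open Scope classical_set_scope.

Lemma pigeon (K : finType) (c0 : K) (N : nat) (Bs : {set 'I_N}) (f : 'I_N -> K) :
  exists c, #|Bs| <= #|K| * #|[set b in Bs | f b == c]|.
Proof.
pose g c := #|[set b in Bs | f b == c]|.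
have [c _ hc] := @arg_maxnP K c0 xpredT g isT.
exists c.
have -> : #|Bs| = \sum_(c' : K) g c'.
  rewrite -sum1_card (partition_big f xpredT) //=.
  apply: eq_bigr => c' _; rewrite /g -sum1_card.
  by apply: eq_bigl => b; rewrite inE.
apply: (@leq_trans (\sum_(c' : K) g c)).
  by apply: leq_sum => c' _; exact: hc.
by rewrite sum_nat_const.
Qed.

Lemma ram (K : finType) (c0 : K) (N m : nat) (col : 'I_N -> 'I_N -> K) :
  forall s (e : K -> nat) (Rs Bs : {set 'I_N}),
  \sum_(c : K) e c = s -> s <= #|Rs| -> #|K| ^ s * m <= #|Bs| ->
  exists c (A B : {set 'I_N}), [/\ A \subset Rs, B \subset Bs, e c <= #|A|,
     m <= #|B| & forall a b, a \in A -> b \in B -> col a b = c].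
Proof.
have K0 : 0 < #|K| by apply/card_gt0P; exists c0.
elim=> [|s IH] e Rs Bs hs hR hB.
  have: e c0 <= \sum_(c : K) e c by rewrite (bigD1 c0) //= leq_addr.
  rewrite hs leqn0 => /eqP e0.
  exists c0, finset.set0, Bs; split; [exact: finset.sub0set|exact: subxx| | | ].
  - by rewrite e0.
  - by apply: leq_trans hB; rewrite expn0 mul1n.
  - by move=> a b; rewrite inE.
case: (pickP (fun c => e c == 0)) => [c /eqP ec0|hpos].
  exists c, finset.set0, Bs; split; [exact: finset.sub0set|exact: subxx| | | ].
  - by rewrite ec0.
  - by apply: leq_trans hB; rewrite leq_pmull // expn_gt0 K0.
  - by move=> a b; rewrite inE.
have /card_gt0P [r rR] : 0 < #|Rs| by apply: leq_trans hR.
have [c hc] := @pigeon _ c0 _ Bs (col r).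
set Bc := [set b in Bs | col r b == c] in hc.
have hBc : #|K| ^ s * m <= #|Bc|.
  rewrite -(leq_pmul2l K0); apply: leq_trans hc; apply: leq_trans hB.
  by rewrite expnS mulnA.
have ecpos : 0 < e c by rewrite lt0n; move: (hpos c) => /= ->.
pose e' c' := if c' == c then (e c).-1 else e c'.
have hs' : \sum_(c' : K) e' c' = s.
  rewrite (bigD1 c) //= {1}/e' eqxx (eq_bigr e); last first.
    by move=> i /negbTE ne; rewrite /e' ne.
  move: hs; rewrite (bigD1 c) //=; lia.
have hR' : s <= #|Rs :\ r|.
  move: hR; rewrite (cardsD1 r Rs) rR; lia.
have [c' [A [B [AR BB ecA mB hcol]]]] := IH e' (Rs :\ r) Bc hs' hR' hBc.
have BcBs : Bc \subset Bs by apply/fintype.subsetP => b; rewrite inE => /andP[].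
case: (eqVneq c' c) => [ec'|nc'].
  subst c'.
  exists c, (r |: A), B; split.
  - apply/fintype.subsetP => x; rewrite !inE => /orP[/eqP ->|xA] //.
    by move/fintype.subsetP: AR => /(_ x xA); rewrite inE => /andP[].
  - exact: fintype.subset_trans BB BcBs.
  - have rA : r \notin A.
      by apply/negP => /(fintype.subsetP AR); rewrite !inE eqxx.
    rewrite cardsU1 rA; move: ecA; rewrite /e' eqxx; lia.
  - exact: mB.
  - move=> a b; rewrite !inE => /orP[/eqP -> bB|aA bB]; last exact: hcol.
    by move/fintype.subsetP: BB => /(_ b bB); rewrite inE => /andP[_ /eqP].
exists c', A, B; split => //.
- exact: fintype.subset_trans AR (subD1set _ _).
- exact: fintype.subset_trans BB BcBs.
- by move: ecA; rewrite /e' (negbTE nc').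
Qed.

Section Real.
Local Open Scope ring_scope.
Lemma ex_min (R : realType) (I : finType) (A : {set I}) (F : I -> R) :
  (exists i, i \in A) -> exists2 i, i \in A & forall j, j \in A -> F i <= F j.
Proof.
move=> [i0 Hi0]; case: (@arg_minP _ R I i0 (mem A) F Hi0) => i Hi Hm.
by exists i.
Qed.

Lemma ex_max (R : realType) (I : finType) (A : {set I}) (F : I -> R) :
  (exists i, i \in A) -> exists2 i, i \in A & forall j, j \in A -> F j <= F i.
Proof.
move=> [i0 Hi0]; case: (@arg_maxP _ R I i0 (mem A) F Hi0) => i Hi Hm.
by exists i.
Qed.

Lemma line_half (R : realType) (I J : finType) (A : {set I}) (B : {set J})
  (b : J -> set R) (w : I -> J -> R) (Q : R -> Prop)
  (fv : I -> J) (fu : J -> I) :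
  (forall v, v \in B -> convex_R (b v)) ->
  (forall u v, u \in A -> v \in B -> b v (w u v) /\ Q (w u v)) ->
  (forall u, u \in A -> fv u \in B) -> (forall v, v \in B -> fu v \in A) ->
  (forall u v, u \in A -> v \in B -> w u v <= w u (fv u)) ->
  (forall u v, u \in A -> v \in B -> w u v <= w (fu v) v) ->
  forall u0 v0, u0 \in A -> v0 \in B ->
  w u0 (fv u0) <= w (fu v0) v0 ->
  (forall v, v \in B -> w (fu v0) v0 <= w (fu v) v) ->
  Q (w u0 (fv u0)) /\ (forall v, v \in B -> b v (w u0 (fv u0))).
Proof.
move=> cb hw fvB fuA hfv hfu u0 v0 u0A v0B h1 h2.
split; first by case: (hw u0 (fv u0) u0A (fvB _ u0A)).
move=> v vB.
apply: (cb v vB (w u0 v) (w (fu v) v)).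
- by case: (hw u0 v u0A vB).
- by case: (hw (fu v) v (fuA _ vB) vB).
- exact: hfv.
- by apply: le_trans h1 _; apply: h2.
Qed.

Lemma line (R : realType) (I J : finType) (A : {set I}) (B : {set J})
  (a : I -> set R) (b : J -> set R) (w : I -> J -> R) (Q : R -> Prop) :
  (exists u, u \in A) -> (exists v, v \in B) ->
  (forall u, u \in A -> convex_R (a u)) ->
  (forall v, v \in B -> convex_R (b v)) ->
  (forall u v, u \in A -> v \in B -> [/\ a u (w u v), b v (w u v) & Q (w u v)]) ->
  exists x, Q x /\ ((forall u, u \in A -> a u x) \/ (forall v, v \in B -> b v x)).
Proof.
move=> hA hB ca cb hw.
have vm : forall u, exists2 v, v \in B & forall v', v' \in B -> w u v' <= w u v.
  by move=> u; apply: ex_max.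
have um : forall v, exists2 u, u \in A & forall u', u' \in A -> w u' v <= w u v.
  by move=> v; apply: ex_max.
pose fv u := s2val (cid2 (vm u)).
pose fu v := s2val (cid2 (um v)).
have fvB u : u \in A -> fv u \in B by move=> _; exact: (s2valP (cid2 (vm u))).
have fuA v : v \in B -> fu v \in A by move=> _; exact: (s2valP (cid2 (um v))).
have hfv u v : u \in A -> v \in B -> w u v <= w u (fv u).
  by move=> _ vB; exact: (s2valP' (cid2 (vm u))).
have hfu u v : u \in A -> v \in B -> w u v <= w (fu v) v.
  by move=> uA _; exact: (s2valP' (cid2 (um v))).
have [u0 u0A hu0] := @ex_min R I A (fun u => w u (fv u)) hA.
have [v0 v0B hv0] := @ex_min R J B (fun v => w (fu v) v) hB.
case: (leP (w u0 (fv u0)) (w (fu v0) v0)) => h.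
  have [hq hb] := @line_half R I J A B b w Q fv fu cb
    (fun u v uA vB => let: And3 _ x y := hw u v uA vB in conj x y)
    fvB fuA hfv hfu u0 v0 u0A v0B h hv0.
  by exists (w u0 (fv u0)); split => //; right.
have [hq hb] := @line_half R J I B A a (fun v u => w u v) Q fu fv ca
    (fun v u vB uA => let: And3 x _ y := hw u v uA vB in conj x y)
    fuA fvB (fun v u vB uA => hfu u v uA vB) (fun v u vB uA => hfv u v uA vB)
    v0 u0 v0B u0A (ltW h) hu0.
by exists (w (fu v0) v0); split => //; left.
Qed.
End Real.

Theorem lemma1 (R : realType) (d : nat) (P : set (R * nat)) :
  (1 <= d)%N ->
  P `<=` [set p | (1 <= p.2 <= d)%N] ->
  ~ finite_set P ->
  is_hpc P (C_equiv d P) 2.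
Proof.
move=> d1 Pd Pinf.
have [p0 Pp0] := infinite_setN0 Pinf.
split.
  exists (fun m => (d.+1 ^ (d.+1 * m) * m + d.+1 * m)%N).
  move=> m F fam meet.
  case: (posnP m) => [m00|m0].
    exists ord0, finset.set0; split; first by rewrite cards0 m00.
    by exists p0; split => // j; rewrite inE.
  set N := (d.+1 ^ (d.+1 * m) * m + d.+1 * m)%N in F fam meet *.
  have dec : forall i j, exists I : nat -> set R,
      (forall k, (1 <= k <= d)%N -> convex_R (I k)) /\ F i j = dinterval_of d I `&` P.
    move=> i j; case: (fam i) => _ /(_ j) [D [[I [cI ->]] ->]]; by exists I.
  pose Ic i j := proj1_sig (cid (dec i j)).
  have IcC i j : forall k, (1 <= k <= d)%N -> convex_R (Ic i j k).
    exact: (proj1 (proj2_sig (cid (dec i j)))).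
  have IcE i j : F i j = dinterval_of d (Ic i j) `&` P.
    exact: (proj2 (proj2_sig (cid (dec i j)))).
  pose cc (a b : 'I_N) : 'I_2 -> 'I_N := fun i => if i == ord0 then a else b.
  pose w a b := proj1_sig (cid (meet (cc a b))).
  have hw a b : [/\ P (w a b), F ord0 a (w a b) & F ord_max b (w a b)].
    have [h1 h2] := proj2_sig (cid (meet (cc a b))).
    split; [done | exact: (h2 ord0) | exact: (h2 ord_max)].
  pose col a b : 'I_(d.+1) := inord (w a b).2.
  have [c [A [B [_ _ mA mB hcol]]]] :=
    @ram 'I_(d.+1) ord0 N m col (d.+1 * m)%N (fun _ => m) [set: 'I_N] [set: 'I_N]
    ltac:(by rewrite sum_nat_const card_ord)
    ltac:(by rewrite cardsT card_ord leq_addl)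
    ltac:(by rewrite cardsT !card_ord leq_addr).
  have [a0 a0A] : exists a, a \in A by apply/card_gt0P; apply: leq_trans mA.
  have [b0 b0B] : exists b, b \in B by apply/card_gt0P; apply: leq_trans mB.
  have w2 a b : (1 <= (w a b).2 <= d)%N.
    by have [h _ _] := hw a b; exact: Pd.
  have colc a b : a \in A -> b \in B -> (w a b).2 = c.
    move=> aA bB; rewrite -(hcol a b aA bB) /col inordK //.
    by rewrite ltnS; case/andP: (w2 a b).
  have c1d : (1 <= c <= d)%N by rewrite -(colc a0 b0 a0A b0B).
  have hyp : forall u v, u \in A -> v \in B ->
      [/\ Ic ord0 u c (w u v).1, Ic ord_max v c (w u v).1 & P ((w u v).1, nat_of_ord c)].
    move=> u v uA vB; have [h0 h1 h2] := hw u v.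
    have e := colc u v uA vB.
    move: h1 h2; rewrite !IcE => -[[_ h1] _] [[_ h2] _].
    rewrite -e; split; [exact: h1 | exact: h2 | by case: (w u v) h0].
  have [x [Qx [hA|hB]]] := @line R _ _ A B (fun u => Ic ord0 u c) (fun v => Ic ord_max v c)
      (fun u v => (w u v).1) (fun x => P (x, nat_of_ord c))
      (ex_intro _ a0 a0A) (ex_intro _ b0 b0B)
      (fun u _ => IcC ord0 u c c1d) (fun v _ => IcC ord_max v c c1d) hyp.
  - exists ord0, A; split => //; exists (x, nat_of_ord c); split => // j jA.
    by rewrite IcE; split => //; split => //; exact: hA.
  - exists ord_max, B; split => //; exists (x, nat_of_ord c); split => // j jB.
    by rewrite IcE; split => //; split => //; exact: hB.
move=> k; case: k => [|[|k]] // _.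
  move=> [Npc H].
  have [//|c|i _] := H 0%N (fun _ _ => set0).
  - by case.
  - by exists p0; split => //; case.
  by case: i.
move=> [Npc H].
pose N := Npc 2%N.
have [B BP hB] := infinite_set_fset N Pinf.
pose p (j : 'I_N) := nth p0 B j.
have pP j : P (p j).
  apply: BP; rewrite /= /p; apply: mem_nth; apply: leq_trans hB; exact: ltn_ord.
have pinj : injective p.
  move=> j1 j2 /eqP; rewrite /p nth_uniq.
  - by move=> /eqP; apply: val_inj.
  - by apply: leq_trans hB; exact: ltn_ord.
  - by apply: leq_trans hB; exact: ltn_ord.
  - exact: fset_uniq.
have [||i [J [hJ [x [Px hx]]]]] := H 2%N (fun _ j => [set p j]).
- move=> _; split.
    move=> j1 j2 e; apply: pinj.
    have : [set p j2] (p j1) by rewrite -e.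
    by [].
  move=> j.
  exists (dinterval_of d (fun k => if k == (p j).2 then [set (p j).1] else set0)).
  split.
    eexists; split; last reflexivity.
    move=> k _; rewrite /convex_R; case: ifP => _ a b c.
      by move=> -> -> ac cb; apply/le_anti; rewrite ac cb.
    by [].
  apply/seteqP; split => y /=.
    move=> ->; split => //; split; first exact: Pd.
    by rewrite eqxx.
  move=> [[_]]; case: ifP => [/eqP e2 e1 _|//].
  by case: y e2 e1 => y1 y2 /= -> ->; case: (p j).
- move=> c; exists (p (c ord0)); split => //.
  by move=> i; rewrite (ord1 i).
have /card_gt1P [j1 [j2 [j1J j2J nj]]] := hJ.
have e1 := hx j1 j1J; have e2 := hx j2 j2J.
by move: nj; rewrite /= in e1 e2; rewrite (pinj j1 j2) ?eqxx // -e1 -e2.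
Qed.
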